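(* Let $L_0$ be a set of locations shared between frames $\mathcal{F}_1$ and $\mathcal{F}_2$, with $\mathrm{LEFT}_0$, $C_{cut,0}$, $\mathrm{RIGHT}_2$ as defined below, and assume $\mathrm{lruns}_{C_{cut,0}}(\mathcal{F}_2)\subseteq\mathrm{lruns}_{C_{cut,0}}(\mathcal{F}_1)$. Let $C_s\subseteq\mathrm{LEFT}_0$, $C_o\subseteq\mathrm{RIGHT}_2$, and let $f$ be a function on sets of $C_s$-runs. If $\mathcal{F}_1$ $f$-limits $C_s$-to-$C_{cut,0}$ flow, then $\mathcal{F}_2$ $f$-limits $C_s$-to-$C_o$ flow.
   Context: A frame $\mathcal{F}$ consists of pairwise disjoint sets of locations $\mathcal{LO}$, channels $\mathcal{CH}$, data values $\mathcal{D}$. Each channel $c$ either has both a sender location $\mathrm{sender}(c)$ and a recipient location $\mathrm{recipient}(c)$ (possibly equal), or neither; the endpoint set $\mathrm{ends}(\ell)$ of a location records which channels it sends/receives on, and $\mathrm{chans}(\ell)=\{c:\mathrm{sender}(c)=\ell\text{ or }\mathrm{recipient}(c)=\ell\}$. Each location $\ell$ has a prefix-closed set $\mathrm{traces}(\ell)$ of finite or infinite sequences of labels $(c,v)$, $c\in\mathrm{chans}(\ell)$, $v\in\mathcal{D}$. Events are drawn from a common set $E$ with functions $\mathrm{chan}$ (to channels) and $\mathrm{msg}$ (to data). A system of events is $(B,\preceq)$, $B\subseteq E$, $\preceq$ a partial order with finitely many predecessors for each event; it is an execution of $\mathcal{F}$ ($\in\mathrm{exec}(\mathcal{F})$) iff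 for each location $\ell$ the events whose channel has $\ell$ as sender or recipient are linearly ordered and, as the sequence of labels $(\mathrm{chan}(e),\mathrm{msg}(e))$, form a member of $\mathrm{traces}(\ell)$. For $C$ a set of channels, $\mathcal{B}|_C$ keeps the events with channel in $C$ and the restricted order. $\mathrm{lruns}_C(\mathcal{F})$ is the set of $\mathcal{A}|_C$ for $\mathcal{A}\in\mathrm{exec}(\mathcal{F})$ ($C$-runs). $J_{C}^{C'}(\mathcal{B})$ computed in frame $\mathcal{F}_i$ is $\{\mathcal{A}|_{C'}:\mathcal{A}\in\mathrm{exec}(\mathcal{F}_i),\ \mathcal{A}|_C=\mathcal{B}\}$. A set $L_0$ is shared between $\mathcal{F}_1,\mathcal{F}_2$ (with locations $\mathcal{LO}_i$, channels $\mathcal{CH}_i$) iff $L_0\subseteq\mathcal{LO}_1\cap\mathcal{LO}_2$ and every $\ell\in L_0$ has the same channel endpoints and the same trace set in both frames. Then $\mathrm{LEFT}_0=\{c\in\mathcal{CH}_1:$ both endpoints of $c$ lie in $L_0\}$, $C_{cut,0}=\{c\in\mathcal{CH}_1:$ exactly one endpoint of $c$ lies in $L_0\}$, $\mathrm{RIGHT}_i=\{c\in\mathcal{CH}_i:$ neither endpoint lies in $L_0\}$. A blur operator is a function $f$ on sets with $S\subseteq f(S)$, $f(f(S))=f(S)$, and $f(\bigcup_{a\in I}S_a)=\bigcup_{a\in I}f(S_a)$ for all families; $S$ is $f$-blurred iff $f$ is a blur operator and $f(S)=S$. Frame $\mathcal{F}_i$ $f$-limits $C$-to-$C'$ flow iff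 $f$ is a blur operator and for every $C'$-run $\mathcal{B}$ of $\mathcal{F}_i$, $J_{C'}^{C}(\mathcal{B})$ (computed in $\mathcal{F}_i$) is $f$-blurred. *)

(* Defs.v *)
From Stdlib Require Import List.
Set Implicit Arguments.
Unset Strict Implicit.

Definition subset {X : Type} (S T : X -> Prop) : Prop := forall x, S x -> T x.

Section Frames.
Variables (Loc Chan Data : Type).

(* A (finite or infinite) sequence of labels: positions 0,1,2,...; once a
   position is undefined (None), all later ones are too. *)
Definition label := (Chan * Data)%type.
Definition is_seq {X : Type} (s : nat -> option X) : Prop :=
  forall n, s n = None -> s (S n) = None.
Definition trunc {X : Type} (k : nat) (s : nat -> option X) : nat -> option X :=
  fun n => if Nat.ltb n k then s n else None.

Record frame := Frame {
  LO : Loc -> Prop;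
  CH : Chan -> Prop;
  sender : Chan -> option Loc;
  recipient : Chan -> option Loc;
  traces : Loc -> (nat -> option label) -> Prop }.

Definition chans (F : frame) (l : Loc) (c : Chan) : Prop :=
  sender F c = Some l \/ recipient F c = Some l.

Definition wf_frame (F : frame) : Prop :=
  (forall c, sender F c = None <-> recipient F c = None) /\
  (forall c l, sender F c = Some l -> CH F c /\ LO F l) /\
  (forall c l, recipient F c = Some l -> CH F c /\ LO F l) /\
  (forall l t, traces F l t ->
     is_seq t /\ forall n c v, t n = Some (c, v) -> chans F l c) /\
  (forall l t k, traces F l t -> traces F l (trunc k t)).

Variables (E : Type) (chan : E -> Chan) (msg : E -> Data).

(* A system of events (B, ⪯): B ⊆ E, le a partial order on B. *)
Record system := System { ev : E -> Prop; le : E -> E -> Prop }.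

Definition is_system (A : system) : Prop :=
  (forall x y, le A x y -> ev A x /\ ev A y) /\
  (forall x, ev A x -> le A x x) /\
  (forall x y, le A x y -> le A y x -> x = y) /\
  (forall x y z, le A x y -> le A y z -> le A x z) /\
  (forall y, ev A y -> exists l : list E, forall x, le A x y -> In x l).

Definition restrict (C : Chan -> Prop) (A : system) : system :=
  System (fun e => ev A e /\ C (chan e))
         (fun x y => le A x y /\ C (chan x) /\ C (chan y)).

Definition loc_ok (F : frame) (A : system) (l : Loc) : Prop :=
  let Ev := fun e => ev A e /\ chans F l (chan e) in
  (forall e1 e2, Ev e1 -> Ev e2 -> le A e1 e2 \/ le A e2 e1) /\
  exists (t : nat -> option label) (s : nat -> option E),
    traces F l t /\
    (forall n, t n = option_map (fun e => (chan e, msg e)) (s n)) /\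
    (forall n e, s n = Some e -> Ev e) /\
    (forall i j ei ej, i < j -> s i = Some ei -> s j = Some ej ->
        le A ei ej /\ ei <> ej) /\
    (forall e, Ev e -> exists n, s n = Some e).

Definition exec (F : frame) (A : system) : Prop :=
  is_system A /\
  (forall e, ev A e -> CH F (chan e)) /\
  (forall l, LO F l -> loc_ok F A l).

Definition lruns (C : Chan -> Prop) (F : frame) : system -> Prop :=
  fun B => exists A, exec F A /\ restrict C A = B.

Definition J (F : frame) (C C' : Chan -> Prop) (B : system) : system -> Prop :=
  fun X => exists A, exec F A /\ restrict C A = B /\ restrict C' A = X.

Definition shared (L0 : Loc -> Prop) (F1 F2 : frame) : Prop :=
  (forall l, L0 l -> LO F1 l /\ LO F2 l) /\
  (forall l, L0 l ->
     (forall c, sender F1 c = Some l <-> sender F2 c = Some l) /\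
     (forall c, recipient F1 c = Some l <-> recipient F2 c = Some l) /\
     traces F1 l = traces F2 l).

Definition endpoint_in (L0 : Loc -> Prop) (o : option Loc) : Prop :=
  exists l, o = Some l /\ L0 l.

Definition LEFT (L0 : Loc -> Prop) (F1 : frame) (c : Chan) : Prop :=
  CH F1 c /\ endpoint_in L0 (sender F1 c) /\ endpoint_in L0 (recipient F1 c).

Definition Ccut (L0 : Loc -> Prop) (F1 : frame) (c : Chan) : Prop :=
  CH F1 c /\ (exists s r, sender F1 c = Some s /\ recipient F1 c = Some r) /\
  ((endpoint_in L0 (sender F1 c) /\ ~ endpoint_in L0 (recipient F1 c)) \/
   (~ endpoint_in L0 (sender F1 c) /\ endpoint_in L0 (recipient F1 c))).

Definition RIGHT (L0 : Loc -> Prop) (Fi : frame) (c : Chan) : Prop :=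
  CH Fi c /\ ~ endpoint_in L0 (sender Fi c) /\ ~ endpoint_in L0 (recipient Fi c).

Definition bigunion {X I : Type} (S : I -> X -> Prop) : X -> Prop :=
  fun x => exists a, S a x.

Definition blur_operator (f : (system -> Prop) -> (system -> Prop)) : Prop :=
  (forall S, subset S (f S)) /\
  (forall S, f (f S) = f S) /\
  (forall (I : Type) (S : I -> system -> Prop),
      f (bigunion S) = bigunion (fun a => f (S a))).

Definition blurred (f : (system -> Prop) -> (system -> Prop)) (S : system -> Prop) : Prop :=
  blur_operator f /\ f S = S.

Definition limits (F : frame) (f : (system -> Prop) -> (system -> Prop))
    (C C' : Chan -> Prop) : Prop :=
  blur_operator f /\
  forall B, lruns C' F B -> blurred f (J F C' C B).

End Frames.

(* Main.v *)
Require Import Defs.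
From Stdlib Require Import List Relations Classical FunctionalExtensionality PropExtensionality.

Lemma list_bigunion {E : Type} (Q : E -> E -> Prop) (l : list E) :
  (forall c, exists lc, forall x, Q x c -> In x lc) ->
  exists L, forall c x, In c l -> Q x c -> In x L.
Proof.
  intros H. induction l as [|a l IH].
  - exists nil. intros c x [].
  - destruct IH as [L HL]. destruct (H a) as [la Ha].
    exists (la ++ L). intros c x [<-|Hc] Hq; apply in_or_app; [left; auto|right; eauto].
Qed.

Definition Rglue {E : Type} (lx ly : E -> E -> Prop) (L N : E -> Prop) (a b : E) : Prop :=
  (lx a b /\ L a /\ L b) \/ (ly a b /\ N a /\ N b).

Lemma order_glue (E : Type) (ex ey : E -> Prop) (lx ly : E -> E -> Prop) (L N : E -> Prop)
  (hX : is_system (System ex lx)) (hY : is_system (System ey ly))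
  (LN : forall e, L e \/ N e)
  (aev : forall e, L e -> N e -> (ex e <-> ey e))
  (ale : forall x y, L x -> N x -> L y -> N y -> (lx x y <-> ly x y)) :
  let Z := System (fun e => (ex e /\ L e) \/ (ey e /\ N e)) (clos_trans E (Rglue lx ly L N)) in
  is_system Z /\
  (forall e, L e -> (ev Z e <-> ex e)) /\
  (forall x y, L x -> L y -> (le Z x y <-> lx x y)) /\
  (forall e, N e -> (ev Z e <-> ey e)) /\
  (forall x y, N x -> N y -> (le Z x y <-> ly x y)).
Proof.
  intros Z.
  destruct hX as [xev [xrefl [xanti [xtrans xfin]]]]; simpl in *.
  destruct hY as [yev [yrefl [yanti [ytrans yfin]]]]; simpl in *.
  set (Rx := fun a b => lx a b /\ L a /\ L b).
  set (Ry := fun a b => ly a b /\ N a /\ N b).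
  set (R2 := fun a b => Rx a b \/ Ry a b \/ (exists c, Rx a c /\ Ry c b)
                         \/ (exists c, Ry a c /\ Rx c b)).
  assert (xx : forall a b c, Rx a b -> Rx b c -> Rx a c).
  { unfold Rx; intros a b c [h1 [h2 h3]] [h4 [h5 h6]]; eauto. }
  assert (yy : forall a b c, Ry a b -> Ry b c -> Ry a c).
  { unfold Ry; intros a b c [h1 [h2 h3]] [h4 [h5 h6]]; eauto. }
  assert (yx : forall a b, Ry a b -> L a -> L b -> Rx a b).
  { unfold Rx, Ry; intros a b [h1 [h2 h3]] h4 h5. repeat split; auto.
    apply (ale a b); auto. }
  assert (xy : forall a b, Rx a b -> N a -> N b -> Ry a b).
  { unfold Rx, Ry; intros a b [h1 [h2 h3]] h4 h5. repeat split; auto.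
    apply (ale a b); auto. }
  assert (xyx : forall a b c d, Rx a b -> Ry b c -> Rx c d -> Rx a d).
  { intros a b c d h1 h2 h3. apply (xx a c d); auto. apply (xx a b c); auto.
    apply yx; auto. destruct h1 as [_ [_ ?]]; auto. destruct h3 as [_ [? _]]; auto. }
  assert (yxy : forall a b c d, Ry a b -> Rx b c -> Ry c d -> Ry a d).
  { intros a b c d h1 h2 h3. apply (yy a c d); auto. apply (yy a b c); auto.
    apply xy; auto. destruct h1 as [_ [_ ?]]; auto. destruct h3 as [_ [? _]]; auto. }
  assert (R2trans : forall a b c, R2 a b -> R2 b c -> R2 a c).
  { unfold R2; intros a b c H1 H2.
    destruct H1 as [h1|[h1|[[m1 [h1 h1']]|[m1 [h1 h1']]]]];
    destruct H2 as [h2|[h2|[[m2 [h2 h2']]|[m2 [h2 h2']]]]];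
    first [ left; solve [eauto 6]
          | right; left; solve [eauto 6]
          | right; right; left; first [exists m1; split; solve [eauto 6] | exists m2; split; solve [eauto 6] | exists b; split; solve [eauto 6]]
          | right; right; right; first [exists m1; split; solve [eauto 6] | exists m2; split; solve [eauto 6] | exists b; split; solve [eauto 6]] ]. }
  assert (toR2 : forall a b, le Z a b -> R2 a b).
  { intros a b H; induction H as [a b [h|h]|a b c _ IH1 _ IH2].
    - left; exact h.
    - right; left; exact h.
    - eauto. }
  assert (LL : forall a b, L a -> L b -> R2 a b -> lx a b).
  { intros a b ha hb [h|[h|[[c [h h']]|[c [h h']]]]].
    - apply h.
    - apply yx in h; auto. apply h.
    - assert (Rx c b) by (apply yx; auto; apply h).
      apply (xx a c b); auto.
    - assert (Rx a c) by (apply yx; auto; apply h').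
      apply (xx a c b); auto. }
  assert (NN : forall a b, N a -> N b -> R2 a b -> ly a b).
  { intros a b ha hb [h|[h|[[c [h h']]|[c [h h']]]]].
    - apply xy in h; auto. apply h.
    - apply h.
    - assert (Ry a c) by (apply xy; auto; apply h').
      apply (yy a c b); auto.
    - assert (Ry c b) by (apply xy; auto; apply h).
      apply (yy a c b); auto. }
  assert (evZ : forall a b, le Z a b -> ev Z a /\ ev Z b).
  { intros a b H; induction H as [a b [h|h]|a b c _ IH1 _ IH2].
    - destruct h as [h [? ?]]. destruct (xev _ _ h). simpl; split; left; auto.
    - destruct h as [h [? ?]]. destruct (yev _ _ h). simpl; split; right; auto.
    - tauto. }
  assert (predx : forall z, exists l, forall x, lx x z -> In x l).
  { intros z. destruct (classic (ex z)) as [hz|hz].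
    - apply xfin; auto.
    - exists nil. intros x h. exfalso. apply hz. apply (xev _ _ h). }
  assert (predy : forall z, exists l, forall x, ly x z -> In x l).
  { intros z. destruct (classic (ey z)) as [hz|hz].
    - apply yfin; auto.
    - exists nil. intros x h. exfalso. apply hz. apply (yev _ _ h). }
  split; [|split; [|split; [|split]]].
  - split; [exact evZ|split; [|split; [|split]]].
    + intros x [[h1 h2]|[h1 h2]]; apply t_step.
      * left; repeat split; auto.
      * right; repeat split; auto.
    + intros a b H1 H2. apply toR2 in H1. apply toR2 in H2.
      destruct (classic (L a /\ L b)) as [[ha hb]|hn1].
      { apply xanti; apply LL; auto. }
      destruct (classic (N a /\ N b)) as [[ha hb]|hn2].
      { apply yanti; apply NN; auto. }
      exfalso.
      assert (gen : forall a b, ~ (L a /\ L b) -> ~ (N a /\ N b) -> R2 a b -> R2 b a ->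
                    L a -> ~ N a -> N b -> ~ L b -> False).
      { clear a b H1 H2 hn1 hn2. intros a b _ _ H1 H2 ha na nb lb.
        destruct H1 as [[? [? ?]]|[[? [? ?]]|[[c [hc hc']]|[c [[? [? ?]] _]]]]]; try tauto.
        destruct H2 as [[? [? ?]]|[[? [? ?]]|[[d [[? [? ?]] _]]|[d [hd hd']]]]]; try tauto.
        assert (Ryc : Ry c d) by (apply (yy c b d); auto).
        assert (Rxcd : Rx c d) by (apply yx; auto; [apply hc|apply hd']).
        assert (c = d).
        { apply xanti. apply Rxcd. apply (xtrans _ a); [apply hd'|apply hc]. }
        subst d. assert (a = c).
        { apply xanti. apply hc. apply hd'. }
        subst c. apply na. apply hc'. }
      destruct (LN a) as [la|na]; destruct (LN b) as [lb|nb]; try tauto.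
      * destruct (classic (N a)); destruct (classic (L b)); try tauto.
        eapply (gen a b); eauto.
      * destruct (classic (N b)); destruct (classic (L a)); try tauto.
        eapply (gen b a); eauto; tauto.
    + intros a b c h1 h2. eapply t_trans; eauto.
    + intros y hy.
      destruct (predx y) as [lxy hlxy]. destruct (predy y) as [lyy hlyy].
      destruct (list_bigunion lx lyy predx) as [M1 HM1].
      destruct (list_bigunion ly lxy predy) as [M2 HM2].
      exists (lxy ++ lyy ++ M1 ++ M2). intros x hxy. apply toR2 in hxy.
      destruct hxy as [h|[h|[[c [h h']]|[c [h h']]]]]; repeat rewrite in_app_iff.
      * left; apply hlxy; apply h.
      * right; left; apply hlyy; apply h.
      * right; right; left. apply (HM1 c); [apply hlyy; apply h'|apply h].
      * right; right; right. apply (HM2 c); [apply hlxy; apply h'|apply h].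
  - intros e he; simpl; split.
    + intros [[? ?]|[? ?]]; auto. apply aev; auto.
    + intros h; left; auto.
  - intros x y hx hy; split.
    + intros h. apply LL; auto.
    + intros h. apply t_step. left; repeat split; auto.
  - intros e he; simpl; split.
    + intros [[? ?]|[? ?]]; auto. apply aev; auto.
    + intros h; right; auto.
  - intros x y hx hy; split.
    + intros h. apply NN; auto.
    + intros h. apply t_step. right; repeat split; auto.
Qed.

Definition Lside {Loc Chan Data : Type} (L0 : Loc -> Prop) (F : frame Loc Chan Data) (c : Chan) : Prop :=
  endpoint_in L0 (sender F c) \/ endpoint_in L0 (recipient F c).
Definition Pl {Loc Chan Data : Type} (L0 : Loc -> Prop) (F : frame Loc Chan Data) (c : Chan) : Prop :=
  endpoint_in L0 (sender F c) /\ endpoint_in L0 (recipient F c).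

Lemma shared_send {Loc Chan Data : Type} (L0 : Loc -> Prop) (F G : frame Loc Chan Data) :
  shared L0 F G -> forall c,
  (endpoint_in L0 (sender F c) <-> endpoint_in L0 (sender G c)) /\
  (endpoint_in L0 (recipient F c) <-> endpoint_in L0 (recipient G c)).
Proof.
  intros [_ h] c. unfold endpoint_in. split; split; intros [l [e hl]];
  exists l; split; auto; apply (h l hl); auto.
Qed.

Lemma cut_of {Loc Chan Data : Type} (L0 : Loc -> Prop) (F : frame Loc Chan Data) :
  wf_frame F -> forall c, Lside L0 F c -> ~ Pl L0 F c -> Ccut L0 F c.
Proof.
  intros [hn [hs [hr _]]] c hL hP. unfold Ccut, Lside, Pl in *.
  destruct hL as [[l [e hl]]|[l [e hl]]].
  - destruct (recipient F c) as [r|] eqn:er.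
    + split; [apply (hs c l e)|]. split; [eauto|]. left; split; [exists l; auto|].
      rewrite <- er. intros h. apply hP. split; [exists l; auto|rewrite er in *; auto].
    + apply hn in er. congruence.
  - destruct (sender F c) as [s|] eqn:es.
    + split; [apply (hr c l e)|]. split; [eauto|]. right; split; [|exists l; auto].
      rewrite <- es. intros h. apply hP. split; [rewrite es in *; auto|exists l; auto].
    + apply hn in es. congruence.
Qed.

Lemma sys_eq {E : Type} (A : system E) : A = System (ev A) (le A).
Proof. destruct A; reflexivity. Qed.

Lemma restrict_ext {Chan E : Type} (chan : E -> Chan) (C : Chan -> Prop) (A B : system E) :
  (forall e, C (chan e) -> (ev A e <-> ev B e)) ->
  (forall x y, C (chan x) -> C (chan y) -> (le A x y <-> le B x y)) ->
  restrict chan C A = restrict chan C B.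
Proof.
  intros h1 h2. unfold restrict. f_equal.
  - extensionality e. apply propositional_extensionality.
    split; intros [a b]; split; auto; apply h1; auto.
  - extensionality x. extensionality y. apply propositional_extensionality.
    split; intros [a [b c]]; repeat split; auto; apply h2; auto.
Qed.

Lemma glue (Loc Chan Data E : Type) (chan : E -> Chan) (msg : E -> Data)
  (F1 Fx Fr : frame Loc Chan Data) (L0 : Loc -> Prop)
  (wf1 : wf_frame F1) (wfr : wf_frame Fr)
  (hxr : shared L0 Fx Fr) (h1r : shared L0 F1 Fr)
  (X Y : system E) (hX : exec chan msg Fx X) (hY : exec chan msg Fr Y)
  (hK : restrict chan (Ccut L0 F1) X = restrict chan (Ccut L0 F1) Y) :
  exists Z, exec chan msg Fr Z /\
    (forall C, (forall c, C c -> Lside L0 F1 c) -> restrict chan C Z = restrict chan C X) /\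
    (forall C, (forall c, C c -> ~ Pl L0 F1 c) -> restrict chan C Z = restrict chan C Y).
Proof.
  assert (hKev : forall e, Ccut L0 F1 (chan e) -> (ev X e <-> ev Y e)).
  { intros e he. pose proof (f_equal (@ev E) hK) as h. simpl in h.
    apply (f_equal (fun g => g e)) in h.
    split; intros h'.
    - assert (ev X e /\ Ccut L0 F1 (chan e)) as h2 by auto. rewrite h in h2. apply h2.
    - assert (ev Y e /\ Ccut L0 F1 (chan e)) as h2 by auto. rewrite <- h in h2. apply h2. }
  assert (hKle : forall x y, Ccut L0 F1 (chan x) -> Ccut L0 F1 (chan y) -> (le X x y <-> le Y x y)).
  { intros x y hx hy. pose proof (f_equal (@le E) hK) as h. simpl in h.
    apply (f_equal (fun g => g x y)) in h.
    split; intros h'.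
    - assert (le X x y /\ Ccut L0 F1 (chan x) /\ Ccut L0 F1 (chan y)) as h2 by auto.
      rewrite h in h2. apply h2.
    - assert (le Y x y /\ Ccut L0 F1 (chan x) /\ Ccut L0 F1 (chan y)) as h2 by auto.
      rewrite <- h in h2. apply h2. }
  destruct hX as [sX [chX locX]]. destruct hY as [sY [chY locY]].
  rewrite (sys_eq X) in sX. rewrite (sys_eq Y) in sY.
  set (L := fun e => Lside L0 F1 (chan e)).
  set (N := fun e => ~ Pl L0 F1 (chan e)).
  assert (LN : forall e, L e \/ N e).
  { intros e. unfold L, N, Lside, Pl. destruct (classic (endpoint_in L0 (sender F1 (chan e)))); tauto. }
  assert (LNcut : forall e, L e -> N e -> Ccut L0 F1 (chan e)).
  { intros e h1 h2. apply cut_of; auto. }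
  destruct (order_glue _ _ _ _ _ L N sX sY LN (fun e a b => hKev e (LNcut e a b))
             (fun x y a b c d => hKle x y (LNcut x a b) (LNcut y c d)))
    as [sZ [evL [leL [evN leN]]]].
  set (Z := System (fun e => (ev X e /\ L e) \/ (ev Y e /\ N e))
                   (clos_trans E (Rglue (le X) (le Y) L N))) in *.
  assert (ends := shared_send L0 F1 Fr h1r).
  exists Z. split; [|split].
  - split; [exact sZ|split].
    + intros e [[hx hl]|[hy hn]]; [|apply chY; auto].
      destruct wfr as [_ [hs [hr _]]].
      destruct (ends (chan e)) as [e1 e2]. unfold L, Lside in hl.
      destruct hl as [h|h]; [apply e1 in h|apply e2 in h]; destruct h as [l0 [h _]].
      * apply (hs _ _ h).
      * apply (hr _ _ h).
    + intros l hl. destruct (classic (L0 l)) as [h0|h0].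
      * destruct hxr as [hxl hxs]. destruct (hxs l h0) as [hs1 [hr1 htr]].
        pose proof (locX l (proj1 (hxl l h0))) as lx. unfold loc_ok in lx |- *.
        cbv zeta in lx |- *.
        destruct lx as [lin [t [s [ht [hts [hs [hord hcov]]]]]]].
        assert (hch : forall c, chans Fx l c <-> chans Fr l c).
        { intros c; unfold chans. rewrite hs1, hr1. tauto. }
        assert (hL : forall c, chans Fr l c -> Lside L0 F1 c).
        { intros c [h|h]; unfold Lside; [left|right].
          - apply (proj1 (ends c)). exists l; auto.
          - apply (proj2 (ends c)). exists l; auto. }
        assert (hEv : forall e, (ev Z e /\ chans Fr l (chan e)) <-> (ev X e /\ chans Fx l (chan e))).
        { intros e. rewrite hch. split; intros [a b]; split; auto;
          apply (evL e (hL _ b)); auto. }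
        split.
        -- intros e1 e2 h1 h2. apply hEv in h1. apply hEv in h2.
           assert (L e1) by (apply hL, hch, h1). assert (L e2) by (apply hL, hch, h2).
           destruct (lin e1 e2 h1 h2); [left|right]; apply leL; auto.
        -- exists t, s. split; [rewrite <- htr; exact ht|]. split; [exact hts|].
           split; [intros n e h; apply hEv; eauto|]. split.
           ++ intros i j ei ej hij h1 h2. destruct (hord i j ei ej hij h1 h2) as [a b].
              split; auto. apply leL; auto.
              ** apply hL, hch. apply (hs i ei h1).
              ** apply hL, hch. apply (hs j ej h2).
           ++ intros e h. apply hEv in h. auto.
      * pose proof (locY l hl) as ly. unfold loc_ok in ly |- *.
        cbv zeta in ly |- *.
        destruct ly as [lin [t [s [ht [hts [hs [hord hcov]]]]]]].
        assert (hN : forall c, chans Fr l c -> ~ Pl L0 F1 c).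
        { intros c hc [p1 p2]. apply (proj1 (ends c)) in p1. apply (proj2 (ends c)) in p2.
          destruct p1 as [l1 [e1 h1]]. destruct p2 as [l2 [e2 h2]].
          destruct hc as [h|h]; congruence. }
        assert (hEv : forall e, (ev Z e /\ chans Fr l (chan e)) <-> (ev Y e /\ chans Fr l (chan e))).
        { intros e. split; intros [a b]; split; auto;
          apply (evN e (hN _ b)); auto. }
        split.
        -- intros e1 e2 h1 h2. apply hEv in h1. apply hEv in h2.
           assert (N e1) by (apply hN, h1). assert (N e2) by (apply hN, h2).
           destruct (lin e1 e2 h1 h2); [left|right]; apply leN; auto.
        -- exists t, s. split; [exact ht|]. split; [exact hts|].
           split; [intros n e h; apply hEv; eauto|]. split.
           ++ intros i j ei ej hij h1 h2. destruct (hord i j ei ej hij h1 h2) as [a b].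
              split; auto. apply leN; auto.
              ** apply hN. apply (hs i ei h1).
              ** apply hN. apply (hs j ej h2).
           ++ intros e h. apply hEv in h. auto.
  - intros C hC. apply restrict_ext.
    + intros e h. apply evL. apply hC; auto.
    + intros x y hx hy. apply leL; apply hC; auto.
  - intros C hC. apply restrict_ext.
    + intros e h. apply evN. apply hC; auto.
    + intros x y hx hy. apply leN; apply hC; auto.
Qed.

Lemma shared_sym {Loc Chan Data : Type} (L0 : Loc -> Prop) (F G : frame Loc Chan Data) :
  shared L0 F G -> shared L0 G F.
Proof.
  intros [h1 h2]. split.
  - intros l hl; destruct (h1 l hl); auto.
  - intros l hl; destruct (h2 l hl) as [a [b c]]. split; [|split].
    + intros x; rewrite a; tauto.
    + intros x; rewrite b; tauto.
    + auto.
Qed.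

Lemma shared_refl {Loc Chan Data : Type} (L0 : Loc -> Prop) (F G : frame Loc Chan Data) :
  shared L0 F G -> shared L0 F F.
Proof.
  intros [h1 h2]. split.
  - intros l hl; destruct (h1 l hl); auto.
  - intros l hl. split; [|split]; [intros; tauto|intros; tauto|auto].
Qed.

Theorem theorem3 (Loc Chan Data E : Type) (chan : E -> Chan) (msg : E -> Data)
  (F1 F2 : frame Loc Chan Data)
  (wf1 : wf_frame F1) (wf2 : wf_frame F2)
  (L0 : Loc -> Prop) (hL0 : shared L0 F1 F2)
  (hruns : subset (lruns chan msg (Ccut L0 F1) F2) (lruns chan msg (Ccut L0 F1) F1))
  (Cs Co : Chan -> Prop)
  (hCs : subset Cs (LEFT L0 F1)) (hCo : subset Co (RIGHT L0 F2))
  (f : (system E -> Prop) -> (system E -> Prop)) :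
  limits chan msg F1 f Cs (Ccut L0 F1) -> limits chan msg F2 f Cs Co.
Proof.
  intros [hb hlim]. split; [exact hb|]. intros B hB.
  set (K := Ccut L0 F1).
  assert (KL : forall c, K c -> Lside L0 F1 c).
  { intros c [_ [_ [[h _]|[_ h]]]]; unfold Lside; auto. }
  assert (CsL : forall c, Cs c -> Lside L0 F1 c).
  { intros c h. destruct (hCs c h) as [_ [h1 _]]. left; auto. }
  assert (CoN : forall c, Co c -> ~ Pl L0 F1 c).
  { intros c h [p _]. destruct (hCo c h) as [_ [h1 _]]. apply h1.
    apply (proj1 (shared_send L0 F1 F2 hL0 c)). exact p. }
  assert (Heq : J chan msg F2 Co Cs B =
     bigunion (fun a : {A | exec chan msg F2 A /\ restrict chan Co A = B} =>
                 J chan msg F1 K Cs (restrict chan K (proj1_sig a)))).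
  { extensionality Xs. apply propositional_extensionality. split.
    - intros [A [hA [hAB hAX]]]. exists (exist _ A (conj hA hAB)). simpl.
      destruct (hruns (restrict chan K A) (ex_intro _ A (conj hA eq_refl))) as [A' [hA' hA'K]].
      destruct (glue _ _ _ _ chan msg F1 F2 F1 L0 wf1 wf1 (shared_sym _ _ _ hL0)
                  (shared_refl _ _ _ hL0) A A' hA hA' (eq_sym hA'K))
        as [Z [hZ [hZX hZY]]].
      exists Z. split; [exact hZ|]. split.
      + apply hZX; auto.
      + rewrite hZX; auto.
    - intros [[A [hA hAB]] [A'' [hA'' [hK hX]]]]. simpl in *.
      destruct (glue _ _ _ _ chan msg F1 F1 F2 L0 wf1 wf2 hL0 hL0 A'' A hA'' hA hK)
        as [Z [hZ [hZX hZY]]].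
      exists Z. split; [exact hZ|]. split.
      + rewrite hZY; auto.
      + rewrite hZX; auto. }
  split; [exact hb|]. rewrite Heq.
  destruct hb as [_ [_ hU]]. rewrite hU. f_equal. extensionality a.
  destruct a as [A [hA hAB]]. simpl.
  destruct (hlim _ (hruns _ (ex_intro _ A (conj hA eq_refl)))) as [_ h]. exact h.
Qed.
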